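(* Let $N\ge1$, $S_1,\dots,S_N\ge1$, and consider an $S_1\times\cdots\times S_N$-setting $N$-partite correlation experiment with joint distributions $P_{(s_1,\dots,s_N)}$ on $\Lambda_1^{(s_1)}\times\cdots\times\Lambda_N^{(s_N)}$, where the outcomes are real with $\lambda_n^{(s_n)}\in\Lambda_n^{(s_n)}\subseteq[-1,1]$, $\sup\Lambda_n^{(s_n)}=1$, $\inf\Lambda_n^{(s_n)}=-1$ for all $s_n,n$ (of any spectral type, discrete or continuous), and suppose it admits an LHV model. Then for any collection of real coefficients $\gamma_{(s_{n_1},\dots,s_{n_M})}$ ($1\le M\le N$, $1\le n_1<\dots<n_M\le N$, $s_{n_j}\in\{1,\dots,S_{n_j}\}$) the tight linear LHV constraint on correlation functions $$\min_{\eta_1\in\{-1,1\}^{S_1},\dots,\eta_N\in\{-1,1\}^{S_N}}\sum_{\substack{1\le n_1<\dots<n_M\le N\\ M=1,\dots,N}}F_M^{(\gamma)}(\eta_{n_1},\dots,\eta_{n_M})\le\sum_{\substack{1\le n_1<\dots<n_M\le N\\ M=1,\dots,N}}\ \sum_{s_{n_1},\dots,s_{n_M}}\gamma_{(s_{n_1},\dots,s_{n_M})}\big\langle\lambda_{n_1}^{(s_{n_1})}\cdots\lambda_{n_M}^{(s_{n_M})}\big\rangle_{LHV}\le\max_{\eta_1\in\{-1,1\}^{S_1},\dots,\eta_N\in\{-1,1\}^{S_N}}\sum_{\substack{1\le n_1<\dots<n_M\le N\\ M=1,\dots,N}}F_M^{(\gamma)}(\eta_{n_1},\dots,\eta_{n_M})$$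 holds, where $F_M^{(\gamma)}(\eta_{n_1},\dots,\eta_{n_M})=\sum_{s_{n_1},\dots,s_{n_M}}\gamma_{(s_{n_1},\dots,s_{n_M})}\eta_{n_1}^{(s_{n_1})}\cdots\eta_{n_M}^{(s_{n_M})}$ for $\eta_n=(\eta_n^{(1)},\dots,\eta_n^{(S_n)})\in\mathbb{R}^{S_n}$; the extrema are over all $2^{S_1+\dots+S_N}$ vertices of the hypercube $[-1,1]^{S_1+\dots+S_N}$.
   Context: The experiment admitting an LHV model is characterized by the existence of a probability measure $\mu$ on the product of all outcome spaces $\prod_{n}\prod_{s_n}\Lambda_n^{(s_n)}$ whose marginal on $(\lambda_1^{(s_1)},\dots,\lambda_N^{(s_N)})$ is $P_{(s_1,\dots,s_N)}$ for every joint setting. The correlation function $\langle\lambda_{n_1}^{(s_{n_1})}\cdots\lambda_{n_M}^{(s_{n_M})}\rangle_{LHV}$ is $\int\lambda_{n_1}^{(s_{n_1})}\cdots\lambda_{n_M}^{(s_{n_M})}\,dP_{(s_1,\dots,s_N)}$ for any joint setting with the given settings at sites $n_1,\dots,n_M$ (in the LHV case it does not depend on the settings at the other sites). A linear LHV constraint is tight if, within the class of experiments with the given outcome sets admitting an LHV model, its bounds cannot be improved. *)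

(* Defs.v *)
From HB Require Import structures.
From mathcomp Require Import all_boot all_order all_algebra.
From mathcomp Require Import all_classical all_reals all_analysis.

Set Implicit Arguments.
Unset Strict Implicit.
Unset Printing Implicit Defensive.
Import Order.TTheory GRing.Theory Num.Theory.
Local Open Scope classical_set_scope.
Local Open Scope ring_scope.

Section Bell.
Variables (R : realType) (N : nat) (S : 'I_N -> nat).

(* measurement sites: pairs (n, s_n), n a party, s_n one of its S_n settings *)
Definition site := {n : 'I_N & 'I_(S n)}.

(* ambient space of the product of all outcome spaces: one real outcome
   lambda_n^(s_n) per pair (n, s_n); finite product of R, measurable
   structure = product (Borel) sigma-algebra of tuples *)
Definition hidden := (#|{: site}|).-tuple R.

Definition coord (w : hidden) (n : 'I_N) (s : 'I_(S n)) : R :=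
  tnth w (enum_rank (Tagged (fun m => 'I_(S m)) s)).

Definition setting := forall n : 'I_N, 'I_(S n).

Definition proj_setting (sg : setting) (w : hidden) : N.-tuple R :=
  [tuple coord w (sg n) | n < N].

(* An experiment: for every joint setting a probability distribution on
   Lam_1^(s_1) x ... x Lam_N^(s_N) (a probability on R^N concentrated on a
   measurable subset of that product). *)
Definition experiment (Lam : forall n : 'I_N, 'I_(S n) -> set R)
    (P : forall sg : setting, probability (N.-tuple R) R) : Prop :=
  forall sg : setting, exists B : set (N.-tuple R),
    [/\ measurable B,
        B `<=` [set x | forall n : 'I_N, Lam n (sg n) (tnth x n)] &
        P sg B = 1%E].

(* LHV model: a probability measure mu on the product of all outcome spaces
   whose marginal on (lambda_1^(s_1),...,lambda_N^(s_N)) is P_(s_1,...,s_N) *)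
Definition LHV_model (Lam : forall n : 'I_N, 'I_(S n) -> set R)
    (P : forall sg : setting, probability (N.-tuple R) R)
    (mu : probability hidden R) : Prop :=
  (exists B : set hidden,
    [/\ measurable B,
        B `<=` [set w | forall (n : 'I_N) (s : 'I_(S n)), Lam n s (coord w s)] &
        mu B = 1%E]) /\
  forall (sg : setting) (A : set (N.-tuple R)), measurable A ->
    P sg A = mu (proj_setting sg @^-1` A).

Definition LHV_experiment (Lam : forall n : 'I_N, 'I_(S n) -> set R)
    (P : forall sg : setting, probability (N.-tuple R) R) : Prop :=
  experiment Lam P /\ exists mu, LHV_model Lam P mu.

(* A term of the constraint: a choice of sites n_1 < ... < n_M (those n with
   t n = Some _) together with settings s_(n_j) there (the Some values);
   the term is non-trivial (M >= 1) iff some t n is not None. *)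
Definition term := {dffun forall n : 'I_N, option 'I_(S n)}.

Definition nontrivial (t : term) : bool := [exists n, t n != None].

Definition extends (sg : setting) (t : term) : Prop :=
  forall (n : 'I_N) (s : 'I_(S n)), t n = Some s -> sg n = s.

Definition correlation (P : forall sg : setting, probability (N.-tuple R) R)
    (sg : setting) (t : term) : R :=
  Rintegral (P sg) setT
    (fun x : N.-tuple R => \prod_(n < N) (if t n is Some _ then tnth x n else 1)).

(* the middle expression of the constraint, where ext t is the joint setting
   used to evaluate the correlation function of term t *)
Definition LHV_value (P : forall sg : setting, probability (N.-tuple R) R)
    (ext : term -> setting) (gamma : term -> R) : R :=
  \sum_(t : term | nontrivial t) gamma t * correlation P (ext t) t.

(* vertices of the hypercube [-1,1]^(S_1+...+S_N): a sign eta_n^(s_n) per site *)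
Definition vertex := {ffun site -> bool}.

Definition sgnb (b : bool) : R := if b then 1 else -1.

Definition eta (v : vertex) (n : 'I_N) (s : 'I_(S n)) : R :=
  sgnb (v (Tagged (fun m => 'I_(S m)) s)).

Definition Fsum (gamma : term -> R) (v : vertex) : R :=
  \sum_(t : term | nontrivial t)
     gamma t * \prod_(n < N) (if t n is Some s then eta v s else 1).

Definition vertex0 : vertex := [ffun _ => true].

Definition Fmax (gamma : term -> R) : R :=
  \big[Num.max/Fsum gamma vertex0]_(v : vertex) Fsum gamma v.

Definition Fmin (gamma : term -> R) : R :=
  \big[Num.min/Fsum gamma vertex0]_(v : vertex) Fsum gamma v.

End Bell.

(* Main.v *)
Require Import Defs.
From HB Require Import structures.
From mathcomp Require Import all_boot all_order all_algebra.
From mathcomp Require Import all_classical all_reals all_analysis.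
From mathcomp Require Import ring lra zify measurable_realfun.
Set Implicit Arguments.
Unset Strict Implicit.
Unset Printing Implicit Defensive.
Import Order.TTheory GRing.Theory Num.Theory.
Local Open Scope classical_set_scope.
Local Open Scope ring_scope.

Section Comb.
Variables (R : realType) (N : nat) (S : 'I_N -> nat).

Definition tg (n : 'I_N) (s : 'I_(S n)) : site S := Tagged (fun m => 'I_(S m)) s.

Definition mono (t : term S) (u : site S -> R) : R :=
  \prod_(n < N) (if t n is Some s then u (tg s) else 1).

Definition G (gamma : term S -> R) (u : site S -> R) : R :=
  \sum_(t : term S | nontrivial t) gamma t * mono t u.

Lemma Fsum_G gamma v : Fsum gamma v = G gamma (fun i => sgnb R (v i)).
Proof. by []. Qed.

Definition upd (u : site S -> R) (i : site S) (x : R) : site S -> R :=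
  fun j => if j == i then x else u j.

Lemma mono_affine t u i : exists a b : R, forall x, mono t (upd u i x) = a + b * x.
Proof.
case: i => n0 s0.
rewrite /mono.
have rest : forall x, \prod_(n < N | n != n0) (if t n is Some s then upd u (Tagged _ s0) x (tg s) else 1)
   = \prod_(n < N | n != n0) (if t n is Some s then u (tg s) else 1).
  move=> x; apply: eq_bigr => n nn0; case: (t n) => // s.
  rewrite /upd; case: eqP => // /(congr1 tag) /= E.
  by rewrite E eqxx in nn0.
set P := \prod_(n < N | n != n0) (if t n is Some s then u (tg s) else 1).
case E: (t n0) => [s|].
- have [Es|ne] := eqVneq s s0; first subst s.
  + exists 0, P => x; rewrite (bigD1 n0) //= rest E /upd /tg eqxx /P; lra.
  + exists (P * u (tg s)), 0 => x; rewrite (bigD1 n0) //= rest E /upd.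
    case: eqP => [h|_].
      by have h' := eq_from_Tagged h; rewrite h' eqxx in ne.
    rewrite /tg /P; lra.
- exists P, 0 => x; rewrite (bigD1 n0) //= rest E /P; lra.
Qed.

Lemma G_affine gamma u i x :
  G gamma (upd u i x) = (1 + x) / 2 * G gamma (upd u i 1) + (1 - x) / 2 * G gamma (upd u i (-1)).
Proof.
rewrite /G mulr_sumr mulr_sumr -big_split /=; apply: eq_bigr => t _.
have [a [b ab]] := mono_affine t u i.
by rewrite !ab; field.
Qed.


Lemma big_max_ge (I : eqType) (r : seq I) (x0 : R) f v : v \in r ->
  f v <= \big[Num.max/x0]_(j <- r) f j.
Proof.
elim: r => // a r IH; rewrite in_cons big_cons => /orP [/eqP ->|/IH h].
  by rewrite le_max lexx.
by rewrite le_max h orbT.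
Qed.

Lemma big_min_le (I : eqType) (r : seq I) (x0 : R) f v : v \in r ->
  \big[Num.min/x0]_(j <- r) f j <= f v.
Proof.
elim: r => // a r IH; rewrite in_cons big_cons => /orP [/eqP ->|/IH h].
  by rewrite ge_min lexx.
by rewrite ge_min h orbT.
Qed.

Lemma Fsum_bound (gamma : term S -> R) (v : vertex S) : Fmin gamma <= Fsum gamma v <= Fmax gamma.
Proof.
by apply/andP; split; [apply: big_min_le|apply: big_max_ge]; rewrite mem_index_enum.
Qed.

Definition bad (u : site S -> R) : {set site S} := finset (fun i => (u i != 1) && (u i != -1)).

Lemma G_bound_k (gamma : term S -> R) k : forall u, (forall i, -1 <= u i <= 1) -> (#|bad u| <= k)%N ->
  Fmin gamma <= G gamma u <= Fmax gamma.
Proof.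
elim: k => [|k IH] u hu hk.
  have -> : u = (fun i => sgnb R ([ffun i => u i == 1] i)).
    apply/funext => i; rewrite ffunE /sgnb.
    have : i \notin bad u.
      by move: hk; rewrite leqn0 => /eqP hk0; apply/negP => hi; move: hk0; apply/eqP; rewrite -lt0n; apply/card_gt0P; by exists i.
    rewrite /bad !inE negb_and !negbK => /orP [/eqP ->|/eqP ->]; first by rewrite eqxx.
    by case: eqP => // h; lra.
  rewrite -Fsum_G; exact: Fsum_bound.
have [hk'|hk'] := leqP #|bad u| k; first exact: IH.
have : (0 < #|bad u|)%N by lia.
case/card_gt0P => i hi.
have Eu : u = upd u i (u i) by apply/funext => j; rewrite /upd; case: eqP => // ->.
have hsub : forall y, y = 1 \/ y = -1 -> (#|bad (upd u i y)| <= k)%N.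
  move=> y hy.
  have : bad (upd u i y) \subset bad u :\ i.
    apply/fintype.subsetP => j; rewrite !inE /upd.
    have [->|ne] := eqVneq j i.
      by case: hy => ->; rewrite ?eqxx ?andbF.
    by [].
  move/subset_leq_card; move: (cardsD1 i (bad u)); rewrite hi /= => E h2; rewrite E add1n ltnS in hk; exact: leq_trans h2 hk.
have hb : forall y, -1 <= y <= 1 -> forall j, -1 <= upd u i y j <= 1.
  by move=> y hy j; rewrite /upd; case: eqP.
have h1 := IH _ (hb 1 ltac:(lra)) (hsub 1 (or_introl erefl)).
have h2 := IH _ (hb (-1) ltac:(lra)) (hsub (-1) (or_intror erefl)).
rewrite Eu G_affine.
have := hu i; move: h1 h2; set G1 := G gamma _; set G2 := G gamma _; set x := u i.
move=> /andP [h1 h1'] /andP [h2 h2'] /andP [hx hx'].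
apply/andP; split; nra.
Qed.

Lemma G_bound (gamma : term S -> R) u : (forall i, -1 <= u i <= 1) ->
  Fmin gamma <= G gamma u <= Fmax gamma.
Proof. move=> hu. exact: (@G_bound_k gamma #|bad u| u hu (leqnn _)). Qed.

Lemma prod_le1 (I : Type) (r : seq I) (P : pred I) (b : I -> R) :
  (forall i, `|b i| <= 1) -> `|\prod_(i <- r | P i) b i| <= 1.
Proof.
move=> hb; elim/big_ind: _ => //; first by rewrite normr1.
move=> x y hx hy; rewrite normrM.
have := normr_ge0 x; have := normr_ge0 y; nra.
Qed.

Lemma prod_diff (I : Type) (r : seq I) (P : pred I) (a b : I -> R) :
  (forall i, `|a i| <= 1) -> (forall i, `|b i| <= 1) ->
  `|\prod_(i <- r | P i) a i - \prod_(i <- r | P i) b i| <= \sum_(i <- r | P i) `|a i - b i|.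
Proof.
move=> ha hb; elim: r => [|x r IH]; first by rewrite !big_nil subrr normr0.
rewrite !big_cons; case: (P x) => //.
have hB := prod_le1 r P hb.
move: IH hB; set A := \prod_(i <- r | P i) a i; set Bp := \prod_(i <- r | P i) b i.
move=> IH hB.
have -> : a x * A - b x * Bp = a x * (A - Bp) + (a x - b x) * Bp by ring.
apply: le_trans (ler_normD _ _) _; rewrite !normrM.
have := ha x; have := normr_ge0 (a x - b x); have := normr_ge0 (A - Bp).
have := normr_ge0 Bp; have:= normr_ge0 (a x); nra.
Qed.

Lemma mono_diff t (u u' : site S -> R) (dl : R) : 0 <= dl ->
  (forall i, -1 <= u i <= 1) -> (forall i, -1 <= u' i <= 1) ->
  (forall i, `|u i - u' i| <= dl) -> `|mono t u - mono t u'| <= N%:R * dl.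
Proof.
move=> d0 hu hu' hd; rewrite /mono.
apply: le_trans (prod_diff _ _ _ _) _.
- by move=> n; case: (t n) => [s|]; rewrite ?normr1 // ler_norml.
- by move=> n; case: (t n) => [s|]; rewrite ?normr1 // ler_norml.
apply: le_trans (_ : \sum_(n < N) dl <= _).
  by apply: ler_sum => n _; case: (t n) => [s|]; rewrite ?subrr ?normr0.
by rewrite sumr_const card_ord mulr_natl.
Qed.

Lemma G_diff (gamma : term S -> R) (u u' : site S -> R) (dl : R) : 0 <= dl ->
  (forall i, -1 <= u i <= 1) -> (forall i, -1 <= u' i <= 1) ->
  (forall i, `|u i - u' i| <= dl) ->
  `|G gamma u - G gamma u'| <= (\sum_(t | nontrivial t) `|gamma t|) * (N%:R * dl).
Proof.
move=> d0 hu hu' hd; rewrite /G -sumrB mulr_suml.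
apply: le_trans (ler_norm_sum _ _ _) _; apply: ler_sum => t _.
rewrite -mulrBr normrM; apply: ler_wpM2l => //; exact: mono_diff.
Qed.

Lemma big_max_attained (I : eqType) (r : seq I) (x0 : R) f :
  \big[Num.max/x0]_(j <- r) f j = x0 \/ exists j, \big[Num.max/x0]_(j <- r) f j = f j.
Proof.
elim: r => [|a r IH]; first by left; rewrite big_nil.
rewrite big_cons maxEle; case: ifP => _; first by [].
by right; exists a.
Qed.

Lemma big_min_attained (I : eqType) (r : seq I) (x0 : R) f :
  \big[Num.min/x0]_(j <- r) f j = x0 \/ exists j, \big[Num.min/x0]_(j <- r) f j = f j.
Proof.
elim: r => [|a r IH]; first by left; rewrite big_nil.
rewrite big_cons minEle; case: ifP => _; last by [].
by right; exists a.
Qed.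

Lemma Fmax_attained (gamma : term S -> R) : exists v, Fmax gamma = Fsum gamma v.
Proof.
case: (big_max_attained (index_enum (vertex S)) (Fsum gamma (vertex0 S)) (Fsum gamma)).
  by rewrite /Fmax => ->; exists (vertex0 S).
by move=> [v h]; exists v.
Qed.

Lemma Fmin_attained (gamma : term S -> R) : exists v, Fmin gamma = Fsum gamma v.
Proof.
case: (big_min_attained (index_enum (vertex S)) (Fsum gamma (vertex0 S)) (Fsum gamma)).
  by rewrite /Fmin => ->; exists (vertex0 S).
by move=> [v h]; exists v.
Qed.

End Comb.
Section Meas.
Context d (T : measurableType d) (R : realType) (mu : probability T R)
  (B : set T) (mB : measurable B) (muB : mu B = 1%E).

Lemma muCB : mu (~` B) = 0%E.
Proof. by rewrite probability_setC // muB subee. Qed.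

Lemma int_onB (f : T -> R) : measurable_fun setT f -> (forall x, B x -> `|f x| <= 1) ->
  mu.-integrable setT (EFin \o f).
Proof.
move=> mf hf.
have mCB : measurable (~` B) by exact: measurableC.
apply/(negligible_integrable mCB) => //; first exact/measurable_EFinP.
  exact: muCB.
rewrite setTD setCK; apply: measurable_bounded_integrable => //.
- exact: (le_lt_trans (probability_le1 _ mB) (ltry _)).
- exact: measurable_funS mf.
- rewrite /bounded_near; near=> M; move=> x Bx /=; apply: le_trans (hf x Bx) _.
  near: M; apply: nbhs_pinfty_ge; exact: num_real.
Unshelve. all: by end_near.
Qed.

Lemma int_B (f : T -> R) (M : R) : measurable_fun setT f -> (forall x, B x -> `|f x| <= M) ->
  mu.-integrable B (EFin \o f).
Proof.
move=> mf hf; apply: measurable_bounded_integrable => //.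
- exact: (le_lt_trans (probability_le1 _ mB) (ltry _)).
- exact: measurable_funS mf.
- rewrite /bounded_near; near=> K; move=> x Bx /=; apply: le_trans (hf x Bx) _.
  near: K; apply: nbhs_pinfty_ge; exact: num_real.
Unshelve. all: by end_near.
Qed.

Lemma Rint_onB (f : T -> R) : mu.-integrable setT (EFin \o f) ->
  Rintegral mu setT f = Rintegral mu B f.
Proof.
move=> hf; rewrite /Rintegral (negligible_integral (N := ~` B)) //.
- by rewrite setTD setCK.
- exact: measurableC.
- exact: muCB.
Qed.

Lemma Rint_sum (I : Type) (r : seq I) (P : pred I) (h : I -> T -> R) :
  (forall i, mu.-integrable B (EFin \o h i)) ->
  \sum_(i <- r | P i) Rintegral mu B (h i) = Rintegral mu B (fun x => \sum_(i <- r | P i) h i x).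
Proof.
move=> hint; rewrite /Rintegral.
under [in RHS]eq_integral do rewrite -sumEFin.
rewrite integral_sum // sum_fine; first reflexivity. by move=> i _; apply: integrable_fin_num => //; exact: hint.
Qed.

Lemma Rint_bound (f : T -> R) (a b : R) : mu.-integrable B (EFin \o f) ->
  (forall x, B x -> a <= f x <= b) -> a <= Rintegral mu B f <= b.
Proof.
move=> hf hab.
have hc : forall c : R, Rintegral mu B (fun _ => c) = c.
  by move=> c; rewrite Rintegral_cst // (_ : fine (mu B) = 1) ?mulr1 //; exact: (congr1 fine muB).
have ic : forall c : R, mu.-integrable B (EFin \o (fun _ : T => c)).
  move=> c; apply: finite_measure_integrable_cst => //.
apply/andP; split.
  rewrite -{1}(hc a); apply: le_Rintegral => // x Bx; by case/andP: (hab x Bx).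
rewrite -(hc b); apply: le_Rintegral => // x Bx; by case/andP: (hab x Bx).
Qed.

End Meas.


Section DiracProb.
Context d (T : measurableType d) (R : realType) (a : T).
HB.instance Definition _ := Measure_isProbability.Build _ _ _ (@dirac d T a R) (diracT R a).
Lemma diracPE (A : set T) : (\d_a : probability T R) A = (a \in A)%:R%:E.
Proof. exact: diracE. Qed.
End DiracProb.

Lemma measurable_set1_tuple (R : realType) n (x : n.-tuple R) : measurable [set x].
Proof.
rewrite (_ : [set x] = \bigcap_(i in [set: 'I_n]) ((fun y : n.-tuple R => tnth y i) @^-1` [set tnth x i])).
  apply: fin_bigcap_measurable; first exact: finite_finset.
  move=> i _; rewrite -[X in measurable X]setTI; apply: measurable_tnth => //.
apply/seteqP; split => [y -> i _ //| y hy]; apply: eq_from_tnth => i; exact: hy i I.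
Qed.

Section Main.
Variables (R : realType) (N : nat) (S : 'I_N -> nat).

Definition cw (w : hidden R S) : site S -> R := fun i => tnth w (enum_rank i).

Definition gfun (t : term S) (x : N.-tuple R) : R :=
  \prod_(n < N) (if t n is Some _ then tnth x n else 1).

Lemma gfun_proj t sg : extends sg t -> forall w, gfun t (proj_setting sg w) = mono t (cw w).
Proof.
move=> ht w; rewrite /gfun /mono; apply: eq_bigr => n _.
case E: (t n) => [s|] //; rewrite tnth_mktuple (ht n s E) //.
Qed.

Lemma mgfun t : measurable_fun setT (gfun t).
Proof.
apply: measurable_prod => n _; case: (t n) => [_|]; [exact: measurable_tnth|exact: measurable_cst].
Qed.

Lemma mmono t : measurable_fun setT (fun w : hidden R S => mono t (cw w)).
Proof.
apply: measurable_prod => n _; case: (t n) => [s|]; [exact: measurable_tnth|exact: measurable_cst].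
Qed.

Lemma mproj sg : measurable_fun setT (@proj_setting R N S sg).
Proof.
apply/measurable_fun_tnthP => i.
rewrite (_ : _ \o _ = fun w : hidden R S => tnth w (enum_rank (tg (sg i)))).
  exact: measurable_tnth.
by apply/funext => w; rewrite /= tnth_mktuple.
Qed.

Lemma mono_bound t (u : site S -> R) : (forall i, -1 <= u i <= 1) -> `|mono t u| <= 1.
Proof.
move=> hu; rewrite /mono; elim/big_ind: _ => //.
- by rewrite normr1.
- move=> x y hx hy; rewrite normrM.
  have := normr_ge0 x; have := normr_ge0 y; nra.
- move=> n _; case: (t n) => [s|]; last by rewrite normr1.
  have := hu (tg s); rewrite ler_norml => /andP [h1 h2]; rewrite h2 andbT; lra.
Qed.


Lemma part1 (Lam : forall n : 'I_N, 'I_(S n) -> set R)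
  (hLam1 : forall n s, Lam n s `<=` [set x : R | -1 <= x <= 1])
  (gamma : term S -> R) P (hexp : LHV_experiment Lam P)
  (ext : term S -> setting S) (hext : forall t, extends (ext t) t) :
  Fmin gamma <= LHV_value P ext gamma <= Fmax gamma.
Proof.
case: hexp => _ [mu [[B [mB hB muB]] hP]].
have hbw : forall w, B w -> forall i, -1 <= cw w i <= 1.
  by move=> w Bw [n s]; exact: (hLam1 n s _ (hB w Bw n s)).
have int1 : forall t, mu.-integrable setT (EFin \o (fun w => mono t (cw w))).
  move=> t; apply: (int_onB mB muB); first exact: mmono.
  by move=> w Bw; exact: mono_bound (hbw w Bw).
have corrE : forall t, correlation P (ext t) t = Rintegral mu B (fun w => mono t (cw w)).
  move=> t; rewrite -(Rint_onB mB muB) // /correlation /Rintegral; congr fine.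
  have mEg : measurable_fun setT (EFin \o gfun t).
    by apply/measurable_EFinP; exact: mgfun.
  have hint : mu.-integrable (proj_setting (ext t) @^-1` setT) ((EFin \o gfun t) \o proj_setting (ext t)).
    rewrite preimage_setT; apply: eq_integrable (int1 t) => // w _ /=.
    by rewrite gfun_proj.
  have E := integral_pushforward (mproj (ext t)) mEg hint measurableT.
  rewrite preimage_setT in E.
  transitivity (\int[mu]_(x in setT) ((EFin \o gfun t) \o proj_setting (ext t)) x)%E; last first.
    by apply: eq_integral => w _; rewrite /= gfun_proj.
  rewrite -E; apply: eq_measure_integral ; first exact: mproj.
  by move=> ? A mA _; exact: hP.
have intm : forall t, mu.-integrable B (EFin \o (fun w => mono t (cw w))).
  move=> t; apply: (int_B _ mB (M := 1)); first exact: mmono.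
  by move=> w Bw; exact: mono_bound (hbw w Bw).
have intg : forall t, mu.-integrable B (EFin \o (fun w => gamma t * mono t (cw w))).
  move=> t; apply: (int_B _ mB (M := `|gamma t|)).
    by apply: measurable_funM => //; exact: mmono.
  move=> w Bw; rewrite normrM -[X in _ <= X]mulr1; apply: ler_wpM2l => //.
  exact: mono_bound (hbw w Bw).
rewrite /LHV_value.
have -> : \sum_(t | nontrivial t) gamma t * correlation P (ext t) t =
   \sum_(t | nontrivial t) Rintegral mu B (fun w => gamma t * mono t (cw w)).
  by apply: eq_bigr => t _; rewrite corrE RintegralZl.
rewrite Rint_sum //.
apply: (Rint_bound mB muB); last by move=> w Bw; exact: G_bound (hbw w Bw).
have := @integrable_sum _ _ _ mu B mB _ (index_enum (term S)) (@nontrivial N S)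
   (fun t w => (gamma t * mono t (cw w))%:E) (fun t _ => intg t).
apply: eq_integrable => // w _ /=; by rewrite sumEFin.
Qed.

Lemma realize (Lam : forall n : 'I_N, 'I_(S n) -> set R) (gamma : term S -> R)
  (u : site S -> R) (hu : forall n (s : 'I_(S n)), Lam n s (u (tg s))) :
  exists P, LHV_experiment Lam P /\
    forall ext : term S -> setting S, (forall t, extends (ext t) t) ->
      LHV_value P ext gamma = G gamma u.
Proof.
pose wh : hidden R S := [tuple u (enum_val i) | i < #|{: site S}|].
have cwh : cw wh = u by apply/funext => i; rewrite /cw tnth_mktuple enum_rankK.
pose P := fun sg : setting S => (\d_(proj_setting sg wh) : probability _ R).
exists P; split.
  split.
    move=> sg; exists [set proj_setting sg wh]; split.
    - exact: measurable_set1_tuple.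
    - move=> x -> n; rewrite tnth_mktuple.
      change (Lam n (sg n) (cw wh (tg (sg n)))); rewrite cwh; exact: hu.
    - by rewrite /P diracPE mem_set.
  exists (\d_wh : probability _ R); split.
    exists [set wh]; split.
    - exact: measurable_set1_tuple.
    - by move=> w -> n s; change (Lam n s (cw wh (tg s))); rewrite cwh; exact: hu.
    - by rewrite diracPE mem_set.
  by move=> sg A mA; rewrite /P !diracPE.
move=> ext hext; rewrite /LHV_value /G; apply: eq_bigr => t _; congr (_ * _).
rewrite /correlation /Rintegral integral_dirac; last first.
  by apply/measurable_EFinP; exact: mgfun.
  by []. rewrite diracPE mem_set // mul1e /=. by rewrite -cwh -(gfun_proj (hext t)).
Qed.

Lemma approx (Lam : forall n : 'I_N, 'I_(S n) -> set R)
  (hLam : forall (n : 'I_N) (s : 'I_(S n)),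
     [/\ Lam n s `<=` [set x : R | -1 <= x <= 1],
         sup (Lam n s) = 1 & inf (Lam n s) = -1])
  (v : vertex S) (dl : R) (d0 : 0 < dl) :
  exists u : site S -> R, [/\ (forall n (s : 'I_(S n)), Lam n s (u (tg s))),
    (forall i, -1 <= u i <= 1) & (forall i, `|u i - sgnb R (v i)| <= dl)].
Proof.
have pt : forall i : site S, exists x, [/\ Lam (tag i) (tagged i) x, -1 <= x <= 1 &
    `|x - sgnb R (v i)| <= dl].
  case=> n s /=; case: (hLam n s) => hsub hsup hinf.
  have ne : Lam n s !=set0.
    apply/set0P; apply/eqP => E0; move: hsup; rewrite E0 sup0 => /eqP.
    by rewrite eq_sym oner_eq0.
  have hub : has_ubound (Lam n s) by exists 1 => y /hsub /andP [].
  have hlb : has_lbound (Lam n s) by exists (-1) => y /hsub /andP [].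
  rewrite /sgnb; case: (v _).
  - have [x Lx hx] := sup_adherent d0 (conj ne hub).
    rewrite hsup in hx; have /andP [h1 h2] := hsub x Lx.
    by exists x; split => //; [apply/andP; split | rewrite ler_norml; apply/andP; split; lra].
  - have [x Lx hx] := inf_adherent d0 (conj ne hlb).
    rewrite hinf in hx; have /andP [h1 h2] := hsub x Lx.
    by exists x; split => //; [apply/andP; split | rewrite ler_norml; apply/andP; split; lra].
case: (choice pt) => f hf.
exists f; split.
- by move=> n s; case: (hf (tg s)).
- by move=> i; case: (hf i).
- by move=> i; case: (hf i).
Qed.

End Main.

Theorem corollary1 (R : realType) (N : nat) (S : 'I_N -> nat)
  (Lam : forall n : 'I_N, 'I_(S n) -> set R)
  (hN : (0 < N)%N) (hS : forall n : 'I_N, (0 < S n)%N)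
  (hLam : forall (n : 'I_N) (s : 'I_(S n)),
     [/\ Lam n s `<=` [set x : R | -1 <= x <= 1],
         sup (Lam n s) = 1 & inf (Lam n s) = -1])
  (gamma : term S -> R) :
  [/\ (* the constraint holds for every experiment admitting an LHV model *)
      (forall P : forall sg : setting S, probability (N.-tuple R) R,
         LHV_experiment Lam P ->
         forall ext : term S -> setting S, (forall t, extends (ext t) t) ->
         Fmin gamma <= LHV_value P ext gamma <= Fmax gamma),
      (* tightness of the upper bound *)
      (forall c : R, c < Fmax gamma ->
         exists P : forall sg : setting S, probability (N.-tuple R) R,
           LHV_experiment Lam P /\
           forall ext : term S -> setting S, (forall t, extends (ext t) t) ->
           c < LHV_value P ext gamma) &
      (* tightness of the lower bound *)
      (forall c : R, Fmin gamma < c ->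
         exists P : forall sg : setting S, probability (N.-tuple R) R,
           LHV_experiment Lam P /\
           forall ext : term S -> setting S, (forall t, extends (ext t) t) ->
           LHV_value P ext gamma < c)].
Proof.
have hLam1 : forall n s, Lam n s `<=` [set x : R | -1 <= x <= 1].
  by move=> n s; case: (hLam n s).
set K := (\sum_(t | nontrivial t) `|gamma t|) * N%:R.
have K0 : 0 <= K by apply: mulr_ge0 => //; apply: sumr_ge0.
have key : forall v (dl : R), 0 < dl -> exists P, LHV_experiment Lam P /\
    forall ext, (forall t, extends (ext t) t) ->
    `|LHV_value P ext gamma - Fsum gamma v| <= K * dl.
  move=> v dl d0; have [u [hu1 hu2 hu3]] := approx hLam v d0.
  have [P [hP hval]] := @realize R N S Lam gamma u hu1.
  exists P; split => // ext hext; rewrite hval // Fsum_G.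
  apply: le_trans (G_diff gamma (ltW d0) hu2 _ hu3) _.
    by move=> i; rewrite /sgnb; case: (v i); apply/andP; split; lra.
  by rewrite /K mulrA.
split.
- move=> P hexp ext hext; exact: (part1 hLam1 gamma hexp hext).
- move=> c hc; have [v hv] := Fmax_attained gamma.
  pose dl := (Fmax gamma - c) / (K + 1).
  have d0 : 0 < dl by apply: divr_gt0; lra.
  have [P [hP hb]] := key v dl d0; exists P; split => // ext hext.
  have := hb ext hext; rewrite -hv ler_norml => /andP [h1 _].
  have : K * dl < Fmax gamma - c.
    rewrite /dl mulrA ltr_pdivrMr; [nra | lra].
  lra.
- move=> c hc; have [v hv] := Fmin_attained gamma.
  pose dl := (c - Fmin gamma) / (K + 1).
  have d0 : 0 < dl by apply: divr_gt0; lra.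
  have [P [hP hb]] := key v dl d0; exists P; split => // ext hext.
  have := hb ext hext; rewrite -hv ler_norml => /andP [_ h1].
  have : K * dl < c - Fmin gamma.
    rewrite /dl mulrA ltr_pdivrMr; [nra | lra].
  lra.
Qed.
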